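(* There is an absolute constant $c>0$ such that for every positive integer $s$ and all real $0<a<b$, there exist probability distributions $P$ and $Q$ supported on $[a,b]$ such that $\int x^\ell\,dP(x)=\int x^\ell\,dQ(x)$ for $\ell=0,1,\dots,s$, and $$\Big|\int_a^b \Big|x-\tfrac{a+b}{2}\Big|\,dP(x)-\int_a^b\Big|x-\tfrac{a+b}{2}\Big|\,dQ(x)\Big|\ \ge\ c\,\frac{b-a}{s}.$$ *)

(* Defs.v *)
From Stdlib Require Import Reals List.
Open Scope R_scope.

(* A finitely supported probability distribution is a list of
   (weight, atom) pairs. *)
Definition fdist := list (R * R).

Definition expect (d : fdist) (f : R -> R) : R :=
  fold_right (fun p acc => fst p * f (snd p) + acc) 0 d.

Definition is_dist_on (a b : R) (d : fdist) : Prop :=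
  (forall p, In p d -> 0 <= fst p /\ a <= snd p <= b) /\
  fold_right (fun p acc => fst p + acc) 0 d = 1.

(* Main.v *)
Require Import Defs.
From Stdlib Require Import Reals List Lra Lia Psatz.
Open Scope R_scope.

Fixpoint gs (F : nat -> R) (M : nat) : R :=
  match M with O => 0 | S M' => gs F M' + F M' end.

Lemma gs_S F M : gs F (S M) = gs F M + F M.
Proof. reflexivity. Qed.

Lemma gs_ext F G M : (forall j, (j < M)%nat -> F j = G j) -> gs F M = gs G M.
Proof. induction M; simpl; intros H; auto. rewrite IHM by (intros; apply H; lia). rewrite H by lia. auto. Qed.

Lemma gs_add F G M : gs (fun j => F j + G j) M = gs F M + gs G M.
Proof. induction M; simpl; [lra|rewrite IHM; lra]. Qed.

Lemma gs_scal c F M : gs (fun j => c * F j) M = c * gs F M.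
Proof. induction M; simpl; [lra|rewrite IHM; lra]. Qed.

Lemma gs_const c M : gs (fun _ => c) M = INR M * c.
Proof. induction M; simpl gs; [simpl; lra|rewrite IHM, S_INR; lra]. Qed.

Lemma gs_zero M : gs (fun _ => 0) M = 0.
Proof. rewrite gs_const; lra. Qed.

Lemma gs_swap F M r : gs (fun j => gs (fun m => F j m) r) M = gs (fun m => gs (fun j => F j m) M) r.
Proof. induction r; simpl. apply gs_zero. rewrite gs_add, IHr. auto. Qed.

Lemma gs_nonneg F M : (forall j, (j < M)%nat -> 0 <= F j) -> 0 <= gs F M.
Proof. induction M; simpl; intros H; [lra|]. assert (0 <= F M) by (apply H; lia).
 assert (0 <= gs F M) by (apply IHM; intros; apply H; lia). lra. Qed.

Lemma gs_ge_first F M : (forall j, (j < S M)%nat -> 0 <= F j) -> F O <= gs F (S M).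
Proof. induction M; simpl; intros H. lra.
 assert (0 <= F (S M)) by (apply H; lia).
 assert (F 0%nat <= gs F (S M)) by (apply IHM; intros; apply H; lia). simpl in H1. lra. Qed.

Lemma gs_tele u M : gs (fun j => u (S j) - u j) M = u M - u O.
Proof. induction M; simpl; [lra|rewrite IHM; lra]. Qed.

Lemma gs_S4 T k : gs T (S (S (S (S k)))) = gs T k + T k + T (S k) + T (S (S k)) + T (S (S (S k))).
Proof. simpl. ring. Qed.

Lemma gs_block4 T n : gs T (4 * n) = gs (fun q => T (4*q)%nat + T (4*q+1)%nat + T (4*q+2)%nat + T (4*q+3)%nat) n.
Proof. induction n. simpl; auto.
 replace (4 * S n)%nat with (S (S (S (S (4*n)))))%nat by lia. rewrite gs_S4, IHn.
 change (gs (fun q => T (4*q)%nat + T (4*q+1)%nat + T (4*q+2)%nat + T (4*q+3)%nat) (S n)) with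
  (gs (fun q => T (4*q)%nat + T (4*q+1)%nat + T (4*q+2)%nat + T (4*q+3)%nat) n + (T (4*n)%nat + T (4*n+1)%nat + T (4*n+2)%nat + T (4*n+3)%nat)).
 replace (S (S (S (4*n))))%nat with (4*n+3)%nat by lia.
 replace (S (S (4*n)))%nat with (4*n+2)%nat by lia. replace (S (4*n))%nat with (4*n+1)%nat by lia.
 ring. Qed.

Definition D (r : nat) (p : R) : R := 1 + 2 * gs (fun m => cos (INR (S m) * p)) r.
Definition A (N : nat) (p : R) : R := gs (fun r => D r p) N.

Lemma D_sin r p : D r p * sin (p/2) = sin ((2 * INR r + 1) * (p/2)).
Proof. induction r.
 - unfold D; simpl gs. simpl INR. replace ((2 * 0 + 1) * (p / 2)) with (p/2) by ring. ring.
 - unfold D in *. rewrite gs_S.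
   replace ((1 + 2 * (gs (fun m : nat => cos (INR (S m) * p)) r + cos (INR (S r) * p))) * sin (p / 2))
   with ((1 + 2 * gs (fun m : nat => cos (INR (S m) * p)) r) * sin (p / 2) + 2 * cos (INR (S r) * p) * sin (p/2)) by ring.
   rewrite IHr. rewrite S_INR.
   replace ((2 * (INR r + 1) + 1) * (p / 2)) with ((INR r + 1) * p + p/2) by field.
   replace ((2 * INR r + 1) * (p / 2)) with ((INR r + 1) * p - p/2) by field.
   rewrite sin_plus, sin_minus. ring.
Qed.

Lemma A_sin N p : A N p * sin (p/2) ^ 2 = sin (INR N * (p/2)) ^ 2.
Proof. induction N.
 - unfold A. simpl gs. replace (INR 0 * (p/2)) with 0 by (simpl; ring). rewrite sin_0. ring.
 - unfold A in *. rewrite gs_S, S_INR.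
   replace ((gs (fun r : nat => D r p) N + D N p) * sin (p / 2) ^ 2)
   with (gs (fun r : nat => D r p) N * sin (p / 2) ^ 2 + (D N p * sin (p/2)) * sin (p/2)) by ring.
   rewrite IHN, D_sin.
   replace ((2 * INR N + 1) * (p / 2)) with (INR N * (p/2) + (INR N * (p/2) + p/2)) by field.
   replace ((INR N + 1) * (p / 2)) with (INR N * (p/2) + p/2) by field.
   set (x := INR N * (p/2)). set (y := p/2).
   rewrite !sin_plus, cos_plus.
   pose proof (sin2_cos2 x) as Hx. pose proof (sin2_cos2 y) as Hy. unfold Rsqr in *. nra.
Qed.

Definition phi (M j : nat) : R := INR j * (2 * PI / INR M).

Lemma grid0 M p a : (0 < p < M)%nat -> gs (fun j => cos (a + INR p * phi M j)) M = 0.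
Proof.
 intros Hp. assert (HM : 0 < INR M) by (apply lt_0_INR; lia).
 assert (Hp0 : 0 < INR p) by (apply lt_0_INR; lia).
 assert (HpM : INR p < INR M) by (apply lt_INR; lia).
 set (b := INR p * (2 * PI / INR M)).
 set (u := fun j => sin (a + (INR j - 1/2) * b)).
 assert (Hs : 0 < sin (b/2)).
 { apply sin_gt_0; unfold b.
   - apply Rmult_lt_0_compat; [|lra]. apply Rmult_lt_0_compat; [lra|]. apply Rdiv_lt_0_compat; [pose proof PI_RGT_0; lra|lra].
   - replace (INR p * (2 * PI / INR M) / 2) with (PI * (INR p / INR M)) by (field; lra).
     pose proof PI_RGT_0. assert (INR p / INR M < 1) by (apply (Rmult_lt_reg_r (INR M)); [lra|]; field_simplify; lra).
     nra. }
 assert (Ht : gs (fun j => 2 * sin (b/2) * cos (a + INR p * phi M j)) M = u M - u O).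
 { rewrite <- gs_tele. apply gs_ext. intros j _. unfold u, phi. rewrite S_INR.
   replace (a + (INR j + 1 - 1/2) * b) with ((a + INR p * (INR j * (2 * PI / INR M))) + b/2) by (unfold b; field; lra).
   replace (a + (INR j - 1/2) * b) with ((a + INR p * (INR j * (2 * PI / INR M))) - b/2) by (unfold b; field; lra).
   rewrite sin_plus, sin_minus. ring. }
 assert (Hu : u M = u O).
 { unfold u. replace (a + (INR M - 1/2) * b) with ((a + (INR 0 - 1/2) * b) + 2 * INR p * PI) by (unfold b; simpl; field; lra).
   apply sin_period. }
 rewrite Hu, Rminus_diag, gs_scal in Ht.
 apply Rmult_integral in Ht. destruct Ht; lra.
Qed.

Lemma gs_scal_r c F M : gs (fun j => F j * c) M = gs F M * c.
Proof. induction M; simpl; [lra|rewrite IHM; lra]. Qed.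

Lemma gridc0 M c : gs (fun j => cos (c + INR 0 * phi M j)) M = INR M * cos c.
Proof. rewrite <- gs_const. apply gs_ext; intros. simpl INR. f_equal; ring. Qed.

Lemma cos_prod x y : cos x * cos y = (cos (y + x) + cos (y - x)) / 2.
Proof. rewrite cos_plus, cos_minus. field. Qed.

Lemma grid_prod M m k c : (1 <= m)%nat -> (k + m < M)%nat ->
  gs (fun j => cos (INR m * phi M j) * cos (c + INR k * phi M j)) M =
  if Nat.eqb m k then INR M * cos c / 2 else 0.
Proof.
 intros H1 H2.
 assert (E : forall j, cos (INR m * phi M j) * cos (c + INR k * phi M j) =
   / 2 * cos (c + INR (k + m) * phi M j) + / 2 * cos (c + (INR k - INR m) * phi M j)).
 { intros j. rewrite cos_prod, plus_INR.
   replace (c + INR k * phi M j + INR m * phi M j) with (c + (INR k + INR m) * phi M j) by ring.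
   replace (c + INR k * phi M j - INR m * phi M j) with (c + (INR k - INR m) * phi M j) by ring. field. }
 rewrite (gs_ext _ _ _ (fun j _ => E j)), gs_add, !gs_scal.
 rewrite grid0 by lia.
 destruct (Nat.eqb_spec m k).
 - subst. rewrite (gs_ext _ (fun j => cos c)) by (intros; replace (c + (INR k - INR k) * phi M j) with c by ring; auto).
   rewrite gs_const. field.
 - destruct (Nat.lt_ge_cases m k).
   + rewrite (gs_ext _ (fun j => cos (c + INR (k - m) * phi M j))).
     * rewrite grid0 by lia. ring.
     * intros. rewrite minus_INR by lia. auto.
   + rewrite (gs_ext _ (fun j => cos (- c + INR (m - k) * phi M j))).
     * rewrite grid0 by lia. ring.
     * intros. rewrite minus_INR by lia. rewrite <- cos_neg. f_equal; ring.
Qed.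

Lemma ind_eq_sum k r : gs (fun m => if Nat.eqb m k then 1 else 0) r = if Nat.ltb k r then 1 else 0.
Proof. induction r; simpl gs. destruct k; reflexivity.
 rewrite IHr. destruct (Nat.eqb_spec r k), (Nat.ltb_spec k r), (Nat.ltb_spec k (S r)); try lra; lia. Qed.

Lemma gridD M r k c : (r + k < M)%nat ->
  gs (fun j => D r (phi M j) * cos (c + INR k * phi M j)) M =
  INR M * cos c * (if Nat.leb k r then 1 else 0).
Proof.
 intros H.
 assert (E : forall j, D r (phi M j) * cos (c + INR k * phi M j) =
    cos (c + INR k * phi M j) + 2 * gs (fun m => cos (INR (S m) * phi M j) * cos (c + INR k * phi M j)) r).
 { intros j. unfold D. rewrite gs_scal_r. ring. }
 rewrite (gs_ext _ _ _ (fun j _ => E j)), gs_add, gs_scal, gs_swap.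
 rewrite (gs_ext (fun m => gs (fun j => cos (INR (S m) * phi M j) * cos (c + INR k * phi M j)) M)
                 (fun m => INR M * cos c / 2 * (if Nat.eqb m (pred k) then (if Nat.eqb k 0 then 0 else 1) else 0))).
 2:{ intros m Hm. rewrite grid_prod by lia. destruct k; simpl.
     - destruct (Nat.eqb m 0); ring.
     - destruct (Nat.eqb m k); ring. }
 rewrite gs_scal.
 destruct k.
 - rewrite gridc0. simpl. rewrite (gs_ext _ (fun _ => 0)) by (intros; destruct (Nat.eqb j 0); auto). rewrite gs_zero. ring.
 - rewrite grid0 by lia. simpl Nat.eqb. simpl pred.
   rewrite (gs_ext _ (fun m => if Nat.eqb m k then 1 else 0)) by (intros; destruct (Nat.eqb j k); auto).
   rewrite ind_eq_sum. destruct (Nat.ltb_spec k r), (Nat.leb_spec (S k) r); try lia; field.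
Qed.

Lemma ind_le_sum k N : gs (fun r => if Nat.leb k r then 1 else 0) N = INR (N - k).
Proof. induction N. simpl. auto. rewrite gs_S, IHN. destruct (Nat.leb_spec k N).
 - replace (S N - k)%nat with (S (N - k)) by lia. rewrite S_INR. ring.
 - replace (S N - k)%nat with 0%nat by lia. replace (N - k)%nat with 0%nat by lia. simpl. ring. Qed.

Lemma gridA M N k c : (N + k <= M)%nat ->
  gs (fun j => A N (phi M j) * cos (c + INR k * phi M j)) M = INR M * cos c * INR (N - k).
Proof.
 intros H. unfold A.
 rewrite (gs_ext _ (fun j => gs (fun r => D r (phi M j) * cos (c + INR k * phi M j)) N)) by (intros; rewrite gs_scal_r; auto).
 rewrite gs_swap.
 rewrite (gs_ext _ (fun r => INR M * cos c * (if Nat.leb k r then 1 else 0))) by (intros; apply gridD; lia).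
 rewrite gs_scal, ind_le_sum. auto.
Qed.

Definition th (M j : nat) : R := PI/2 + phi M j.
Definition wP (n j : nat) : R := A n (phi (4*n) j) / (2 * INR n * INR (4*n)).
Definition wQ (n j : nat) : R := A (2*n) (phi (4*n) j) / (2 * INR n * INR (4*n)).
Definition EP (n : nat) (h : R -> R) : R := /2 * h (PI/2) + gs (fun j => wP n j * h (th (4*n) j)) (4*n).
Definition EQ (n : nat) (h : R -> R) : R := gs (fun j => wQ n j * h (th (4*n) j)) (4*n).

Lemma EP_ext n f g : (forall t, f t = g t) -> EP n f = EP n g.
Proof. intros H. unfold EP. rewrite H. f_equal. apply gs_ext; intros; rewrite H; auto. Qed.
Lemma EQ_ext n f g : (forall t, f t = g t) -> EQ n f = EQ n g.
Proof. intros H. unfold EQ. apply gs_ext; intros; rewrite H; auto. Qed.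
Lemma EP_add n f g : EP n (fun t => f t + g t) = EP n f + EP n g.
Proof. unfold EP.
 rewrite (gs_ext _ (fun j => wP n j * f (th (4 * n) j) + wP n j * g (th (4 * n) j))) by (intros; ring).
 rewrite gs_add. ring. Qed.
Lemma EQ_add n f g : EQ n (fun t => f t + g t) = EQ n f + EQ n g.
Proof. unfold EQ.
 rewrite (gs_ext _ (fun j => wQ n j * f (th (4 * n) j) + wQ n j * g (th (4 * n) j))) by (intros; ring).
 rewrite gs_add. ring. Qed.
Lemma EP_scal n c f : EP n (fun t => c * f t) = c * EP n f.
Proof. unfold EP.
 rewrite (gs_ext _ (fun j => c * (wP n j * f (th (4 * n) j)))) by (intros; ring). rewrite gs_scal. ring. Qed.
Lemma EQ_scal n c f : EQ n (fun t => c * f t) = c * EQ n f.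
Proof. unfold EQ.
 rewrite (gs_ext _ (fun j => c * (wQ n j * f (th (4 * n) j)))) by (intros; ring). rewrite gs_scal. ring. Qed.

Lemma EP_cos n k : (1 <= n)%nat -> (k <= n)%nat ->
  EP n (fun t => cos (INR k * t)) = cos (INR k * (PI/2)) * (2 * INR n - INR k) / (2 * INR n).
Proof.
 intros Hn Hk. assert (0 < INR n) by (apply lt_0_INR; lia).
 assert (0 < INR (4*n)) by (apply lt_0_INR; lia).
 unfold EP, wP.
 rewrite (gs_ext _ (fun j => / (2 * INR n * INR (4 * n)) * (A n (phi (4 * n) j) * cos (INR k * (PI/2) + INR k * phi (4*n) j)))).
 2:{ intros. unfold th. rewrite Rmult_plus_distr_l. field. lra. }
 rewrite gs_scal, gridA by lia. rewrite minus_INR by lia. field. lra.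
Qed.

Lemma EQ_cos n k : (1 <= n)%nat -> (k <= n)%nat ->
  EQ n (fun t => cos (INR k * t)) = cos (INR k * (PI/2)) * (2 * INR n - INR k) / (2 * INR n).
Proof.
 intros Hn Hk. assert (0 < INR n) by (apply lt_0_INR; lia).
 assert (0 < INR (4*n)) by (apply lt_0_INR; lia).
 unfold EQ, wQ.
 rewrite (gs_ext _ (fun j => / (2 * INR n * INR (4 * n)) * (A (2*n) (phi (4 * n) j) * cos (INR k * (PI/2) + INR k * phi (4*n) j)))).
 2:{ intros. unfold th. rewrite Rmult_plus_distr_l. field. lra. }
 rewrite gs_scal, gridA by lia. rewrite minus_INR by lia. replace (INR (2*n)) with (2 * INR n) by (rewrite mult_INR; simpl; ring). field. lra.
Qed.

Inductive CP (d : nat) : (R -> R) -> Prop :=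
| CPcos : forall k, (k <= d)%nat -> CP d (fun t => cos (INR k * t))
| CPadd : forall f g, CP d f -> CP d g -> CP d (fun t => f t + g t)
| CPscal : forall c f, CP d f -> CP d (fun t => c * f t)
| CPext : forall f g, CP d f -> (forall t, f t = g t) -> CP d g.

Lemma CP_mono d d' f : (d <= d')%nat -> CP d f -> CP d' f.
Proof. intros H HC. induction HC. apply CPcos; lia. apply CPadd; auto. apply CPscal; auto. eapply CPext; eauto. Qed.

Lemma CP_mulcos d f : CP d f -> CP (S d) (fun t => cos t * f t).
Proof.
 intros HC. induction HC.
 - destruct k.
   + apply CPext with (fun t => cos (INR 1 * t)). apply CPcos; lia.
     intros t. simpl INR. rewrite Rmult_0_l, cos_0, Rmult_1_l, Rmult_1_r. auto.
   + apply CPext with (fun t => /2 * cos (INR (S (S k)) * t) + /2 * cos (INR k * t)).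
     apply CPadd; apply CPscal; apply CPcos; lia.
     intros t. rewrite !S_INR.
     replace ((INR k + 1 + 1) * t) with ((INR k + 1) * t + t) by ring.
     replace (INR k * t) with ((INR k + 1) * t - t) by ring.
     rewrite cos_plus, cos_minus. field.
 - apply CPext with (fun t => cos t * f t + cos t * g t). apply CPadd; auto. intros; ring.
 - apply CPext with (fun t => c * (cos t * f t)). apply CPscal; auto. intros; ring.
 - apply CPext with (fun t => cos t * f t); auto. intros; rewrite H; auto.
Qed.

Lemma CP_pow m0 r l : CP l (fun t => (m0 + r * cos t) ^ l).
Proof.
 induction l.
 - apply CPext with (fun t => cos (INR 0 * t)). apply CPcos; lia. intros; simpl; rewrite Rmult_0_l, cos_0; auto.
 - apply CPext with (fun t => m0 * (m0 + r * cos t) ^ l + r * (cos t * (m0 + r * cos t) ^ l)).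
   apply CPadd. apply CPscal. apply CP_mono with l; auto.
   apply CPscal. apply CP_mulcos; auto.
   intros; simpl; ring.
Qed.

Lemma EP_EQ n f : (1 <= n)%nat -> CP n f -> EP n f = EQ n f.
Proof.
 intros Hn HC. induction HC.
 - rewrite EP_cos, EQ_cos; auto.
 - rewrite EP_add, EQ_add; congruence.
 - rewrite EP_scal, EQ_scal; congruence.
 - rewrite <- (EP_ext n f g), <- (EQ_ext n f g); auto.
Qed.

Definition g (t : R) : R := Rabs (cos t) / sin t.

Lemma block_identity S C s c :
  (C*c + S*s) * (S*c + C*s) * S + (C*c - S*s) * (S*c - C*s) * S - 2 * C * ((S*c - C*s) * (S*c + C*s))
  = 2 * C * s^2 * (S^2 + C^2).
Proof. ring. Qed.

Lemma alg_frac a S b Ca C Cb N : a <> 0 -> S <> 0 -> b <> 0 ->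
  Ca*b*S + Cb*a*S - 2*C*(a*b) = N -> Ca/a - 2*(C/S) + Cb/b = N/(a*S*b).
Proof. intros. rewrite <- H2. field. auto. Qed.

Lemma block_expr t h : 0 < sin (t - h) -> 0 < sin t -> 0 < sin (t + h) ->
  cos (t-h)/sin(t-h) - 2 * (cos t / sin t) + cos (t+h)/sin (t+h) =
  2 * cos t * sin h ^ 2 / (sin (t-h) * sin t * sin (t+h)).
Proof.
 intros H1 H2 H3. apply alg_frac; try lra.
 pose proof (block_identity (sin t) (cos t) (sin h) (cos h)) as E.
 pose proof (sin2_cos2 t) as P. unfold Rsqr in P.
 rewrite sin_minus, cos_minus, sin_plus, cos_plus.
 replace (sin t ^ 2 + cos t ^ 2) with 1 in E by (simpl; lra). rewrite Rmult_1_r in E. rewrite <- E. ring.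
Qed.

Lemma block_nonneg t h : 0 < sin (t - h) -> 0 < sin t -> 0 < sin (t + h) ->
  (0 <= cos (t-h) /\ 0 <= cos t /\ 0 <= cos (t+h)) \/ (cos (t-h) <= 0 /\ cos t <= 0 /\ cos (t+h) <= 0) ->
  0 <= g (t-h) - 2 * g t + g (t+h).
Proof.
 intros H1 H2 H3 [[C1 [C2 C3]]|[C1 [C2 C3]]]; unfold g.
 - rewrite !Rabs_right by lra. rewrite block_expr by auto.
   apply Rmult_le_pos; [|left; apply Rinv_0_lt_compat; apply Rmult_lt_0_compat; [apply Rmult_lt_0_compat|]; lra].
   apply Rmult_le_pos; [lra| simpl; nra].
 - rewrite !Rabs_left1 by lra.
   replace (- cos (t - h) / sin (t - h) - 2 * (- cos t / sin t) + - cos (t + h) / sin (t + h))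
     with (- (cos (t-h)/sin(t-h) - 2 * (cos t / sin t) + cos (t+h)/sin (t+h))) by (field; lra).
   rewrite block_expr by auto.
   replace (- (2 * cos t * sin h ^ 2 / (sin (t - h) * sin t * sin (t + h)))) with
     ((2 * (- cos t) * sin h ^ 2) * / (sin (t - h) * sin t * sin (t + h))) by (field; lra).
   apply Rmult_le_pos; [|left; apply Rinv_0_lt_compat; apply Rmult_lt_0_compat; [apply Rmult_lt_0_compat|]; lra].
   apply Rmult_le_pos; [lra| simpl; nra].
Qed.

Lemma inv_le_frac x N D : 0 < x -> 0 < D -> D <= x * N -> 1 / x <= N / D.
Proof. intros. apply Rmult_le_reg_r with (x * D). nra. replace (1 / x * (x * D)) with D by (field; lra). replace (N / D * (x * D)) with (x * N) by (field; lra). auto. Qed.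

Lemma block0 h : 0 < h -> h <= PI / 8 -> 1 / (6 * h) <= g h - 2 * g (2*h) + g (3*h).
Proof.
 intros H0 H8. pose proof PI_RGT_0 as HPI. pose proof PI_4 as HPI4.
 assert (Hs : 0 < sin h) by (apply sin_gt_0; lra).
 assert (Hsh : sin h < h) by (apply sin_lt_x; lra).
 assert (Hc : 0 < cos h) by (apply cos_gt_0; lra).
 assert (HS : 0 < sin (2*h)) by (apply sin_gt_0; lra).
 assert (HB : 0 < sin (3*h)) by (apply sin_gt_0; lra).
 assert (HC : 0 < cos (2*h)) by (apply cos_gt_0; lra).
 assert (HC3 : 0 <= cos (3*h)) by (apply cos_ge_0; lra).
 unfold g. rewrite !Rabs_right by lra.
 assert (E := block_expr (2*h) h). replace (2*h - h) with h in E by ring. replace (2*h+h) with (3*h) in E by ring.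
 rewrite E by auto. clear E.
 pose proof (cos_2a_sin h) as E2. pose proof (sin_2a h) as S2.
 replace (3*h) with (2*h + h) by ring. rewrite sin_plus.
 rewrite E2, S2. rewrite E2 in HC. rewrite S2 in HS.
 assert (cos h <= 1) by (pose proof (COS_bound h); lra).
 assert (1 - 2 * sin h * sin h >= 1/2) by nra.
 apply Rle_trans with (1 / (6 * sin h)).
 - apply Rmult_le_compat_l; [lra|]. apply Rinv_le_contravar; lra.
 - assert (HB' : 0 < 2 * sin h * cos h * cos h + (1 - 2 * sin h * sin h) * sin h).
   { replace (3*h) with (2*h + h) in HB by ring. rewrite sin_plus, E2, S2 in HB. auto. }
   apply inv_le_frac; [lra| |].
   + apply Rmult_lt_0_compat; [apply Rmult_lt_0_compat|]; lra.
   + assert (2 * sin h * cos h * cos h + (1 - 2 * sin h * sin h) * sin h <= 3 * sin h) by nra.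
     assert (2 * sin h * cos h <= 2 * sin h) by nra.
     set (s0 := sin h) in *. set (c0 := cos h) in *.
     set (B := 2 * s0 * c0 * c0 + (1 - 2 * s0 * s0) * s0) in *.
     assert (HSB : 2 * s0 * c0 * B <= 6 * s0 ^ 2).
     { apply Rle_trans with (2 * s0 * B). apply Rmult_le_compat_r; lra. simpl. nra. }
     assert (HSB2 : s0 * (2 * s0 * c0 * B) <= s0 * (6 * s0 ^ 2)) by (apply Rmult_le_compat_l; lra).
     assert (6 * s0 ^ 2 <= 12 * (1 - 2 * s0 * s0) * s0 ^ 2) by (simpl; nra).
     assert (s0 * (6 * s0 ^ 2) <= s0 * (12 * (1 - 2 * s0 * s0) * s0 ^ 2)) by (apply Rmult_le_compat_l; lra).
     replace (s0 * (2 * s0 * c0) * B) with (s0 * (2 * s0 * c0 * B)) by ring.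
     replace (6 * s0 * (2 * (1 - 2 * s0 * s0) * s0 ^ 2)) with (s0 * (12 * (1 - 2 * s0 * s0) * s0 ^ 2)) by ring.
     lra.
Qed.

Definition Tj (n j : nat) : R := (A (2*n) (phi (4*n) j) - A n (phi (4*n) j)) * Rabs (cos (th (4*n) j)).
Definition hh (n : nat) : R := PI / INR (4*n).

Lemma INR4 n : INR (4*n) = 4 * INR n.
Proof. rewrite mult_INR. simpl. ring. Qed.

Lemma half_angle n j : (1 <= n)%nat -> phi (4*n) j / 2 = INR j * hh n.
Proof. intros. unfold phi, hh. assert (0 < INR n) by (apply lt_0_INR; lia). rewrite INR4. field. lra. Qed.

Lemma jh_bounds n j : (1 <= n)%nat -> (1 <= j < 4*n)%nat -> 0 < INR j * hh n < PI.
Proof. intros Hn Hj. unfold hh. pose proof PI_RGT_0. rewrite INR4.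
 assert (1 <= INR j) by (apply (le_INR 1); lia). assert (INR j < 4 * INR n) by (rewrite <- INR4; apply lt_INR; lia).
 assert (0 < INR n) by (apply lt_0_INR; lia). split.
 - apply Rmult_lt_0_compat; [lra|]. apply Rdiv_lt_0_compat; lra.
 - replace (INR j * (PI / (4 * INR n))) with (PI * (INR j / (4 * INR n))) by (field; lra).
   assert (INR j / (4 * INR n) < 1). { apply (Rmult_lt_reg_r (4 * INR n)). lra. field_simplify; lra. }
   nra.
Qed.

Lemma A_closed n N j : (1 <= n)%nat -> (1 <= j < 4*n)%nat ->
  A N (phi (4*n) j) = sin (INR N * (INR j * hh n)) ^ 2 / sin (INR j * hh n) ^ 2.
Proof. intros Hn Hj. pose proof (A_sin N (phi (4*n) j)) as E. rewrite half_angle in E by auto.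
 pose proof (jh_bounds n j Hn Hj). assert (0 < sin (INR j * hh n)) by (apply sin_gt_0; lra).
 rewrite <- E. field. lra. Qed.

Lemma cos_th n j : (1 <= n)%nat -> (1 <= j < 4*n)%nat ->
  Rabs (cos (th (4*n) j)) = 2 * sin (INR j * hh n) * Rabs (cos (INR j * hh n)).
Proof. intros Hn Hj. pose proof (jh_bounds n j Hn Hj). assert (0 < sin (INR j * hh n)) by (apply sin_gt_0; lra).
 unfold th. replace (phi (4*n) j) with (2 * (INR j * hh n)) by (rewrite <- half_angle by auto; field).
 assert (E := sin_cos (2 * (INR j * hh n))). rewrite sin_2a in E.
 replace (cos (PI / 2 + 2 * (INR j * hh n))) with (- (2 * sin (INR j * hh n) * cos (INR j * hh n))) by lra.
 rewrite Rabs_Ropp, !Rabs_mult. rewrite (Rabs_right 2) by lra. rewrite (Rabs_right (sin _)) by lra. auto.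
Qed.

Lemma T_formula n j : (1 <= n)%nat -> (1 <= j < 4*n)%nat ->
  Tj n j = (sin (INR j * (PI/2)) ^ 2 - sin (INR j * (PI/4)) ^ 2) * (2 * g (INR j * hh n)).
Proof. intros Hn Hj. pose proof (jh_bounds n j Hn Hj). assert (0 < sin (INR j * hh n)) by (apply sin_gt_0; lra).
 assert (0 < INR n) by (apply lt_0_INR; lia).
 unfold Tj. rewrite !A_closed by auto. rewrite cos_th by auto.
 replace (INR (2*n) * (INR j * hh n)) with (INR j * (PI/2)) by (unfold hh; rewrite INR4, mult_INR; simpl; field; lra).
 replace (INR n * (INR j * hh n)) with (INR j * (PI/4)) by (unfold hh; rewrite INR4; field; lra).
 unfold g. field. lra.
Qed.

Lemma sin_sq_kPI x q : sin (x + INR q * PI) ^ 2 = sin x ^ 2.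
Proof. induction q. simpl. rewrite Rmult_0_l, Rplus_0_r. auto.
 rewrite S_INR. replace (x + (INR q + 1) * PI) with ((x + INR q * PI) + PI) by ring. rewrite neg_sin.
 rewrite <- IHq. ring. Qed.

Lemma sinsq2 q r : sin (INR (4*q + r) * (PI/2)) ^ 2 = sin (INR r * (PI/2)) ^ 2.
Proof. replace (INR (4*q+r) * (PI/2)) with (INR r * (PI/2) + 2 * INR q * PI) by (rewrite plus_INR, mult_INR; simpl; field).
 rewrite sin_period. auto. Qed.

Lemma sinsq4 q r : sin (INR (4*q + r) * (PI/4)) ^ 2 = sin (INR r * (PI/4)) ^ 2.
Proof. replace (INR (4*q+r) * (PI/4)) with (INR r * (PI/4) + INR q * PI) by (rewrite plus_INR, mult_INR; simpl; field).
 apply sin_sq_kPI. Qed.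

Lemma inv_sqrt2_sq : (1 / sqrt 2) ^ 2 = 1/2.
Proof. assert (0 < sqrt 2) by (apply sqrt_lt_R0; lra). pose proof (sqrt_sqrt 2).
 replace ((1 / sqrt 2) ^ 2) with (1 / (sqrt 2 * sqrt 2)) by (field; lra). rewrite H0 by lra. auto. Qed.

Lemma block_val n q : (1 <= n)%nat -> (q < n)%nat ->
  Tj n (4*q) + Tj n (4*q+1) + Tj n (4*q+2) + Tj n (4*q+3) =
  g (INR (4*q+2) * hh n - hh n) - 2 * g (INR (4*q+2) * hh n) + g (INR (4*q+2) * hh n + hh n).
Proof.
 intros Hn Hq.
 assert (T0 : Tj n (4*q) = 0).
 { destruct q.
   - unfold Tj, th. replace (phi (4*n) (4*0)) with 0 by (unfold phi; simpl; ring).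
     rewrite Rplus_0_r, cos_PI2, Rabs_R0. ring.
   - rewrite T_formula by lia. replace (4 * S q)%nat with (4 * S q + 0)%nat by lia.
     rewrite sinsq2, sinsq4. simpl INR. rewrite !Rmult_0_l, sin_0. ring. }
 rewrite T0, !T_formula by lia. rewrite !sinsq2, !sinsq4.
 replace (INR 1 * (PI/2)) with (PI/2) by (simpl; ring).
 replace (INR 1 * (PI/4)) with (PI/4) by (simpl; ring).
 replace (INR 2 * (PI/2)) with PI by (simpl; field).
 replace (INR 2 * (PI/4)) with (PI/2) by (simpl; field).
 replace (INR 3 * (PI/2)) with (3 * (PI/2)) by (simpl; ring).
 replace (INR 3 * (PI/4)) with (3 * (PI/4)) by (simpl; ring).
 rewrite sin_PI2, sin_PI4, sin_PI, sin_3PI2, sin_3PI4, inv_sqrt2_sq.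
 replace (INR (4*q+1) * hh n) with (INR (4*q+2) * hh n - hh n) by (rewrite !plus_INR; simpl; ring).
 replace (INR (4*q+3) * hh n) with (INR (4*q+2) * hh n + hh n) by (rewrite !plus_INR; simpl; ring).
 field.
Qed.

Lemma jh_le k j : (1 <= k)%nat -> (j <= 4*k)%nat -> INR j * hh (2*k) <= PI/2.
Proof. intros Hk Hj. unfold hh. assert (0 < INR k) by (apply lt_0_INR; lia). pose proof PI_RGT_0.
 assert (INR j <= 4 * INR k) by (replace (4 * INR k) with (INR (4*k)) by (rewrite mult_INR; simpl; ring); apply le_INR; auto).
 replace (INR (4 * (2 * k))) with (8 * INR k) by (rewrite !mult_INR; simpl; ring).
 replace (INR j * (PI / (8 * INR k))) with (PI * INR j / (8 * INR k)) by (field; lra).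
 apply (Rmult_le_reg_r (8 * INR k)). lra. field_simplify; nra. Qed.

Lemma jh_ge k j : (1 <= k)%nat -> (4*k <= j)%nat -> PI/2 <= INR j * hh (2*k).
Proof. intros Hk Hj. unfold hh. assert (0 < INR k) by (apply lt_0_INR; lia). pose proof PI_RGT_0.
 assert (4 * INR k <= INR j) by (replace (4 * INR k) with (INR (4*k)) by (rewrite mult_INR; simpl; ring); apply le_INR; auto).
 replace (INR (4 * (2 * k))) with (8 * INR k) by (rewrite !mult_INR; simpl; ring).
 replace (INR j * (PI / (8 * INR k))) with (PI * INR j / (8 * INR k)) by (field; lra).
 apply (Rmult_le_reg_r (8 * INR k)). lra. field_simplify; nra. Qed.

Lemma hh_pos n : (1 <= n)%nat -> 0 < hh n.
Proof. intros. unfold hh. apply Rdiv_lt_0_compat. apply PI_RGT_0. apply lt_0_INR; lia. Qed.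

Lemma gs_ge_first' F M : (1 <= M)%nat -> (forall j, (j < M)%nat -> 0 <= F j) -> F O <= gs F M.
Proof. intros HM H. destruct M; [lia|]. apply gs_ge_first; auto. Qed.

Lemma sum_bound k : (1 <= k)%nat -> 1 / (6 * hh (2*k)) <= gs (Tj (2*k)) (4*(2*k)).
Proof.
 intros Hk. set (n := (2*k)%nat). assert (Hn : (1 <= n)%nat) by (unfold n; lia).
 pose proof (hh_pos n Hn) as Hh.
 rewrite gs_block4.
 rewrite (gs_ext _ (fun q => g (INR (4*q+2) * hh n - hh n) - 2 * g (INR (4*q+2) * hh n) + g (INR (4*q+2) * hh n + hh n)))
   by (intros; apply block_val; auto).
 eapply Rle_trans; [|apply gs_ge_first'; [exact Hn|]].
 - replace (INR (4*0+2)) with 2 by (simpl; ring). replace (2 * hh n - hh n) with (hh n) by ring.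
   replace (2 * hh n + hh n) with (3 * hh n) by ring.
   apply block0; auto. unfold hh. apply Rmult_le_compat_l. left; apply PI_RGT_0.
   apply Rinv_le_contravar. lra. replace 8 with (INR 8) by (simpl; ring). apply le_INR. unfold n; lia.
 - intros q Hq. set (t := INR (4*q+2) * hh n).
   assert (E1 : t - hh n = INR (4*q+1) * hh n) by (unfold t; rewrite !plus_INR, !mult_INR; simpl; ring).
   assert (E3 : t + hh n = INR (4*q+3) * hh n) by (unfold t; rewrite !plus_INR, !mult_INR; simpl; ring).
   pose proof (jh_bounds n (4*q+1) Hn ltac:(lia)). pose proof (jh_bounds n (4*q+2) Hn ltac:(lia)).
   pose proof (jh_bounds n (4*q+3) Hn ltac:(lia)).
   apply block_nonneg; rewrite ?E1, ?E3; try (apply sin_gt_0; unfold t; lra).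
   destruct (Nat.lt_ge_cases q k).
   + left. unfold n in *.
     pose proof (jh_le k (4*q+3) Hk ltac:(lia)). pose proof (jh_le k (4*q+2) Hk ltac:(lia)). pose proof (jh_le k (4*q+1) Hk ltac:(lia)).
     repeat split; apply cos_ge_0; unfold t; lra.
   + right. unfold n in *.
     pose proof (jh_ge k (4*q+3) Hk ltac:(lia)). pose proof (jh_ge k (4*q+2) Hk ltac:(lia)). pose proof (jh_ge k (4*q+1) Hk ltac:(lia)).
     repeat split; apply cos_le_0; unfold t; lra.
Qed.

Lemma expect_app l1 l2 f : expect (l1 ++ l2) f = expect l1 f + expect l2 f.
Proof. induction l1; simpl. ring. rewrite IHl1. ring. Qed.

Lemma expect_map_seq (G : nat -> R * R) M f :
  expect (map G (seq 0 M)) f = gs (fun j => fst (G j) * f (snd (G j))) M.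
Proof. induction M. reflexivity. rewrite seq_S, map_app, expect_app, IHM, gs_S. simpl. ring. Qed.

Lemma fold_weights d : fold_right (fun p acc => fst p + acc) 0 d = expect d (fun _ => 1).
Proof. induction d; simpl. auto. rewrite IHd. ring. Qed.

Definition X (a b t : R) : R := (a+b)/2 + (b-a)/2 * cos t.
Definition Pl (a b : R) (n : nat) : fdist :=
  (/2, X a b (PI/2)) :: map (fun j => (wP n j, X a b (th (4*n) j))) (seq 0 (4*n)).
Definition Ql (a b : R) (n : nat) : fdist :=
  map (fun j => (wQ n j, X a b (th (4*n) j))) (seq 0 (4*n)).

Lemma expect_P a b n f : expect (Pl a b n) f = EP n (fun t => f (X a b t)).
Proof. unfold Pl, EP. simpl expect. rewrite expect_map_seq. simpl. auto. Qed.
Lemma expect_Q a b n f : expect (Ql a b n) f = EQ n (fun t => f (X a b t)).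
Proof. unfold Ql, EQ. rewrite expect_map_seq. simpl. auto. Qed.

Lemma A_nonneg n N j : (1 <= n)%nat -> (j < 4*n)%nat -> 0 <= A N (phi (4*n) j).
Proof. intros Hn Hj. destruct j.
 - unfold phi. rewrite Rmult_0_l. unfold A. apply gs_nonneg. intros r _. unfold D.
   assert (0 <= gs (fun m => cos (INR (S m) * 0)) r).
   { apply gs_nonneg. intros. rewrite Rmult_0_r, cos_0. lra. }
   lra.
 - rewrite A_closed by lia. unfold Rdiv. apply Rmult_le_pos. simpl; nra.
   left. apply Rinv_0_lt_compat. pose proof (jh_bounds n (S j) Hn ltac:(lia)).
   assert (0 < sin (INR (S j) * hh n)) by (apply sin_gt_0; lra). apply pow_lt; auto.
Qed.

Lemma X_in a b t : a < b -> a <= X a b t <= b.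
Proof. intros. unfold X. pose proof (COS_bound t). split; nra. Qed.

Lemma dist_P a b n : (1 <= n)%nat -> a < b -> is_dist_on a b (Pl a b n).
Proof.
 intros Hn Hab. assert (0 < INR n) by (apply lt_0_INR; lia). assert (0 < INR (4*n)) by (apply lt_0_INR; lia).
 split.
 - intros p Hp. unfold Pl in Hp. destruct Hp as [Hp|Hp].
   + subst. simpl. split; [lra|apply X_in; auto].
   + apply in_map_iff in Hp. destruct Hp as [j [Hj Hin]]. apply in_seq in Hin. subst. simpl.
     split; [|apply X_in; auto]. unfold wP. apply Rmult_le_pos. apply A_nonneg; lia.
     left. apply Rinv_0_lt_compat. nra.
 - rewrite fold_weights, expect_P.
   rewrite (EP_ext n _ (fun t => cos (INR 0 * t))) by (intros; simpl; rewrite Rmult_0_l, cos_0; auto).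
   rewrite EP_cos by lia. simpl INR. rewrite Rmult_0_l, cos_0. field. lra.
Qed.

Lemma dist_Q a b n : (1 <= n)%nat -> a < b -> is_dist_on a b (Ql a b n).
Proof.
 intros Hn Hab. assert (0 < INR n) by (apply lt_0_INR; lia). assert (0 < INR (4*n)) by (apply lt_0_INR; lia).
 split.
 - intros p Hp. unfold Ql in Hp.
   apply in_map_iff in Hp. destruct Hp as [j [Hj Hin]]. apply in_seq in Hin. subst. simpl.
   split; [|apply X_in; auto]. unfold wQ. apply Rmult_le_pos. apply A_nonneg; lia.
   left. apply Rinv_0_lt_compat. nra.
 - rewrite fold_weights, expect_Q.
   rewrite (EQ_ext n _ (fun t => cos (INR 0 * t))) by (intros; simpl; rewrite Rmult_0_l, cos_0; auto).
   rewrite EQ_cos by lia. simpl INR. rewrite Rmult_0_l, cos_0. field. lra.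
Qed.

Lemma moments a b n l : (1 <= n)%nat -> (l <= n)%nat ->
  expect (Pl a b n) (fun x => x ^ l) = expect (Ql a b n) (fun x => x ^ l).
Proof. intros. rewrite expect_P, expect_Q. apply EP_EQ; auto. unfold X.
 apply CP_mono with l; auto. apply CP_pow. Qed.

Lemma abs_diff a b n : (1 <= n)%nat -> a < b ->
  expect (Pl a b n) (fun x => Rabs (x - (a + b) / 2)) - expect (Ql a b n) (fun x => Rabs (x - (a + b) / 2))
  = - ((b - a) / 2 * (gs (Tj n) (4*n) / (2 * INR n * INR (4*n)))).
Proof.
 intros Hn Hab. assert (0 < INR n) by (apply lt_0_INR; lia). assert (0 < INR (4*n)) by (apply lt_0_INR; lia).
 rewrite expect_P, expect_Q.
 rewrite (EP_ext n _ (fun t => (b-a)/2 * Rabs (cos t))).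
 2:{ intros. unfold X. replace ((a + b) / 2 + (b - a) / 2 * cos t - (a + b) / 2) with ((b-a)/2 * cos t) by ring.
     rewrite Rabs_mult, (Rabs_right ((b-a)/2)) by lra. auto. }
 rewrite (EQ_ext n _ (fun t => (b-a)/2 * Rabs (cos t))).
 2:{ intros. unfold X. replace ((a + b) / 2 + (b - a) / 2 * cos t - (a + b) / 2) with ((b-a)/2 * cos t) by ring.
     rewrite Rabs_mult, (Rabs_right ((b-a)/2)) by lra. auto. }
 rewrite EP_scal, EQ_scal. unfold EP, EQ. rewrite cos_PI2, Rabs_R0, Rmult_0_r, Rplus_0_l.
 replace (gs (Tj n) (4 * n) / (2 * INR n * INR (4 * n))) with
   (gs (fun j => wQ n j * Rabs (cos (th (4 * n) j)) - wP n j * Rabs (cos (th (4 * n) j))) (4*n)).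
 - rewrite (gs_ext (fun j => wQ n j * Rabs (cos (th (4 * n) j)) - wP n j * Rabs (cos (th (4 * n) j)))
     (fun j => wQ n j * Rabs (cos (th (4 * n) j)) + (-1) * (wP n j * Rabs (cos (th (4 * n) j))))) by (intros; ring).
   rewrite gs_add, gs_scal. ring.
 - unfold Rdiv. rewrite <- gs_scal_r. apply gs_ext. intros. unfold Tj, wP, wQ. field. lra.
Qed.

Theorem proposition2 :
  exists c : R, 0 < c /\
    forall (s : nat), (1 <= s)%nat ->
    forall a b : R, 0 < a -> a < b ->
    exists P Q : fdist,
      is_dist_on a b P /\ is_dist_on a b Q /\
      (forall l : nat, (l <= s)%nat ->
         expect P (fun x => x ^ l) = expect Q (fun x => x ^ l)) /\
      Rabs (expect P (fun x => Rabs (x - (a + b) / 2))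
            - expect Q (fun x => Rabs (x - (a + b) / 2)))
        >= c * (b - a) / INR s.
Proof.
 exists (1/192). split; [lra|].
 intros s Hs a b Ha Hab.
 exists (Pl a b (2*s)), (Ql a b (2*s)).
 split; [apply dist_P; auto; lia|].
 split; [apply dist_Q; auto; lia|].
 split; [intros l Hl; apply moments; lia|].
 rewrite abs_diff by (auto; lia). rewrite Rabs_Ropp.
 pose proof (sum_bound s Hs) as HB.
 assert (Hs0 : 0 < INR s) by (apply lt_0_INR; lia).
 pose proof PI_RGT_0. pose proof PI_4.
 assert (E1 : INR (2*s) = 2 * INR s) by (rewrite mult_INR; simpl; ring).
 assert (E2 : INR (4*(2*s)) = 8 * INR s) by (rewrite !mult_INR; simpl; ring).
 assert (Eh : hh (2*s) = PI / (8 * INR s)) by (unfold hh; rewrite E2; auto).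
 rewrite Eh in HB. rewrite E1, E2.
 replace (1 / (6 * (PI / (8 * INR s)))) with (8 * INR s / (6 * PI)) in HB by (field; lra).
 set (G := gs (Tj (2 * s)) (4 * (2 * s))) in *.
 assert (HG : 0 <= G). { apply Rle_trans with (8 * INR s / (6 * PI)); auto. left. apply Rdiv_lt_0_compat; lra. }
 rewrite Rabs_right.
 2:{ apply Rle_ge. apply Rmult_le_pos. lra. apply Rmult_le_pos. auto. left. apply Rinv_0_lt_compat. nra. }
 apply Rle_ge.
 apply Rle_trans with ((b - a) / 2 * (8 * INR s / (6 * PI) / (2 * (2 * INR s) * (8 * INR s)))).
 - replace ((b - a) / 2 * (8 * INR s / (6 * PI) / (2 * (2 * INR s) * (8 * INR s)))) with
     ((b - a) / INR s * / (48 * PI)) by (field; lra).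
   replace (1 / 192 * (b - a) / INR s) with ((b - a) / INR s * / 192) by (field; lra).
   apply Rmult_le_compat_l. apply Rlt_le, Rdiv_lt_0_compat; lra.
   apply Rinv_le_contravar; lra.
 - apply Rmult_le_compat_l. lra. unfold Rdiv. apply Rmult_le_compat_r.
   left; apply Rinv_0_lt_compat; nra. auto.
Qed.
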